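(* Let $1<w\le 2$, $1<h\le 2$ and $n\ge 2$. There exist reals $\frac12\le y_1<\dots<y_n\le h-\frac12$ such that the instance consisting of the strip $[0,w]\times[0,h]$ and these $y_i$ admits a staircase layout with gap $\frac{w+h-2}{n-1}$.
   Context: A layout is a pair $(\mathbf x,\prec)$ where $\mathbf x=(x_1,\dots,x_n)$ with $x_i\in[\frac12,w-\frac12]$, and $\prec$ is a total order (stacking order) on the squares $s_1,\dots,s_n$, where $s_i$ is the closed axis-parallel unit square with centre $(x_i,y_i)$. If $s_i\prec s_j$ we say $s_j$ is in front of $s_i$ and $s_i$ is behind $s_j$. A point $p$ on the boundary of $s_i$ is visible if every square $s_j$ ($j\neq i$) containing $p$ is behind $s_i$. The visible perimeter of $s_i$ is the total length of its visible boundary points; the gap of $s_i$ is its visible perimeter minus $2$, and the gap of a layout is the minimum of the gaps of its squares. A staircase is a layout in which $x_1\le\dots\le x_n$ or $x_1\ge\dots\ge x_n$, and in which $s_1\prec\dots\prec s_n$ or $s_1\succ\dots\succ s_n$. *)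

(* Defs.v *)
From HB Require Import structures.
From mathcomp Require Import all_boot all_order all_algebra.
From mathcomp Require Import all_classical all_reals all_analysis.
From mathcomp Require Import fingroup perm.
Set Implicit Arguments. Unset Strict Implicit. Unset Printing Implicit Defensive.
Import Order.TTheory GRing.Theory Num.Theory.
Local Open Scope ring_scope.
Local Open Scope classical_set_scope.

Definition unit_square {R : realType} (cx cy : R) : set (R * R) :=
  [set p | `|p.1 - cx| <= 2^-1 /\ `|p.2 - cy| <= 2^-1].

(* A stacking order on the n squares is encoded by a rank permutation
   sigma : s_i is behind s_j (s_i ≺ s_j) iff sigma i < sigma j. *)
Definition behind {n : nat} (sigma : {perm 'I_n}) (i j : 'I_n) : bool :=
  (sigma i < sigma j)%N.

Definition visible_pt {R : realType} {n : nat} (x y : 'I_n -> R)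
    (sigma : {perm 'I_n}) (i : 'I_n) (p : R * R) : Prop :=
  forall j : 'I_n, j != i -> unit_square (x j) (y j) p -> behind sigma j i.

Definition edge_pt {R : realType} (cx cy : R) (k : 'I_4) (t : R) : R * R :=
  match val k with
  | 0 => (cx - 2^-1 + t, cy - 2^-1)
  | 1 => (cx - 2^-1 + t, cy + 2^-1)
  | 2 => (cx - 2^-1, cy - 2^-1 + t)
  | _ => (cx + 2^-1, cy - 2^-1 + t)
  end.

Definition visible_perimeter {R : realType} {n : nat} (x y : 'I_n -> R)
    (sigma : {perm 'I_n}) (i : 'I_n) : \bar R :=
  (\sum_(k < 4)
     (@lebesgue_measure R)
       [set t : R | ((0 <= t <= 1)%R /\ visible_pt x y sigma i (edge_pt (x i) (y i) k t))])%E.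

Definition square_gap {R : realType} {n : nat} (x y : 'I_n -> R)
    (sigma : {perm 'I_n}) (i : 'I_n) : \bar R :=
  (visible_perimeter x y sigma i - 2%:E)%E.

Definition layout_gap {R : realType} {n : nat} (x y : 'I_n -> R)
    (sigma : {perm 'I_n}) : \bar R :=
  (\big[Order.min/+oo]_(i < n) square_gap x y sigma i)%E.

Definition is_layout {R : realType} {n : nat} (w : R) (x : 'I_n -> R) : Prop :=
  forall i, 2^-1 <= x i <= w - 2^-1.

Definition is_staircase {R : realType} {n : nat} (x : 'I_n -> R)
    (sigma : {perm 'I_n}) : Prop :=
  ((forall i j : 'I_n, (i <= j)%N -> x i <= x j) \/
   (forall i j : 'I_n, (i <= j)%N -> x j <= x i)) /\
  ((forall i j : 'I_n, (i < j)%N -> behind sigma i j) \/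
   (forall i j : 'I_n, (i < j)%N -> behind sigma j i)).

(* Main.v *)
Require Import Defs.
From HB Require Import structures.
From mathcomp Require Import all_boot all_order all_algebra.
From mathcomp Require Import all_classical all_reals all_analysis.
From mathcomp Require Import fingroup perm.
Import Order.TTheory GRing.Theory Num.Theory.
Local Open Scope ring_scope.
From mathcomp Require Import ring lra.
Definition pos {R : realType} (a : R) {n : nat} (i : 'I_n) : R := 2^-1 + (i:nat)%:R * a.

Lemma pos_gap {R : realType} (a : R) n (i j : 'I_n) :
  0 < a -> (i < j)%N -> a <= pos a j - pos a i.
Proof.
move=> a0 ij; rewrite /pos.
have : ((i:nat).+1%:R <= (j:nat)%:R :> R) by rewrite ler_nat.
rewrite -natr1 => h.
have -> : 2^-1 + (j:nat)%:R * a - (2^-1 + (i:nat)%:R * a) = ((j:nat)%:R - (i:nat)%:R) * a by ring.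
rewrite -[X in X <= _]mul1r; apply: ler_wpM2r; [exact: ltW| lra].
Qed.

Arguments pos_gap {R a n i j}.

Lemma behind1 n (i j : 'I_n) : behind (1%g : {perm 'I_n}) i j = (i < j)%N.
Proof. by rewrite /behind !perm1. Qed.

Lemma vis_low {R : realType} (a b : R) n (i : 'I_n) (p : R * R) :
  0 < a -> 0 < b ->
  (p.1 = pos a i - 2^-1 \/ p.2 = pos b i - 2^-1) ->
  visible_pt (pos a) (pos b) 1%g i p.
Proof.
move=> a0 b0 hp j ji [h1 h2]; rewrite behind1.
case: (ltngtP j i) => // ij; last by move/val_inj: ij ji => ->; rewrite eqxx.
have g1 := pos_gap a0 ij; have g2 := pos_gap b0 ij.
case: hp => e; [move: h1|move: h2]; rewrite e.
  rewrite ler_norml => /andP[+ _]; lra.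
rewrite ler_norml => /andP[+ _]; lra.
Qed.

Lemma vis_high {R : realType} (a b : R) n (i : 'I_n) (t : R) :
  0 < a -> a <= 1 -> 0 < b -> b <= 1 -> 0 <= t <= 1 ->
  visible_pt (pos a) (pos b) 1%g i (pos a i - 2^-1 + t, pos b i + 2^-1)
  <-> ((i.+1 < n)%N -> t < a).
Proof.
move=> a0 a1 b0 b1 /andP[t0 t1]; split.
  move=> hv ilt; rewrite ltNge; apply/negP => ta.
  have hne : Ordinal ilt != i by rewrite -val_eqE /= neq_ltn ltnSn orbT.
  suff hsq : unit_square (pos a (Ordinal ilt)) (pos b (Ordinal ilt))
     (pos a i - 2^-1 + t, pos b i + 2^-1).
    by have := hv _ hne hsq; rewrite behind1 /= ltnNge leqnSn.
  rewrite /unit_square /= /pos /=.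
  have -> : 2^-1 + (i:nat)%:R * a - 2^-1 + t - (2^-1 + (i.+1)%:R * a) = t - 2^-1 - a.
    by rewrite -natr1; ring.
  have -> : 2^-1 + (i:nat)%:R * b + 2^-1 - (2^-1 + (i.+1)%:R * b) = 2^-1 - b.
    by rewrite -natr1; ring.
  by rewrite !ler_norml; split; apply/andP; split; lra.
move=> ht j ji [/= h1 h2]; rewrite behind1.
case: (ltngtP j i) => // ij; last by move/val_inj: ij ji => ->; rewrite eqxx.
have iln : (i.+1 < n)%N by apply: leq_trans (ltn_ord j).
have := ht iln; have g1 := pos_gap a0 ij.
move: h1; rewrite ler_norml => /andP[+ _]; lra.
Qed.

Lemma vis_right {R : realType} (a b : R) n (i : 'I_n) (t : R) :
  0 < a -> a <= 1 -> 0 < b -> b <= 1 -> 0 <= t <= 1 ->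
  visible_pt (pos a) (pos b) 1%g i (pos a i + 2^-1, pos b i - 2^-1 + t)
  <-> ((i.+1 < n)%N -> t < b).
Proof.
move=> a0 a1 b0 b1 /andP[t0 t1]; split.
  move=> hv ilt; rewrite ltNge; apply/negP => ta.
  have hne : Ordinal ilt != i by rewrite -val_eqE /= neq_ltn ltnSn orbT.
  suff hsq : unit_square (pos a (Ordinal ilt)) (pos b (Ordinal ilt))
     (pos a i + 2^-1, pos b i - 2^-1 + t).
    by have := hv _ hne hsq; rewrite behind1 /= ltnNge leqnSn.
  rewrite /unit_square /= /pos /=.
  have -> : 2^-1 + (i:nat)%:R * b - 2^-1 + t - (2^-1 + (i.+1)%:R * b) = t - 2^-1 - b.
    by rewrite -natr1; ring.
  have -> : 2^-1 + (i:nat)%:R * a + 2^-1 - (2^-1 + (i.+1)%:R * a) = 2^-1 - a.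
    by rewrite -natr1; ring.
  by rewrite !ler_norml; split; apply/andP; split; lra.
move=> ht j ji [/= h1 h2]; rewrite behind1.
case: (ltngtP j i) => // ij; last by move/val_inj: ij ji => ->; rewrite eqxx.
have iln : (i.+1 < n)%N by apply: leq_trans (ltn_ord j).
have := ht iln; have g1 := pos_gap b0 ij.
move: h2; rewrite ler_norml => /andP[+ _]; lra.
Qed.

Arguments vis_high {R a b n i t}.
Arguments vis_right {R a b n i t}.

Lemma meas_co {R : realType} {c : R} : 0 < c ->
  (@lebesgue_measure R) `[0, c[%classic = c%:E.
Proof. by move=> c0; rewrite lebesgue_measure_itv /= lte_fin c0 sube0. Qed.

Lemma meas_cc {R : realType} : (@lebesgue_measure R) `[0, 1]%classic = 1%:E.
Proof. by rewrite lebesgue_measure_itv /= lte_fin ltr01 sube0. Qed.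

Definition cnt {R : realType} {n} (i : 'I_n) (a : R) := if (i.+1 < n)%N then a else 1.

Lemma meas_edge {R : realType} (a b : R) n (i : 'I_n) (k : 'I_4) :
  0 < a -> a <= 1 -> 0 < b -> b <= 1 ->
  (@lebesgue_measure R) [set t : R | ((0 <= t <= 1)%R /\
     visible_pt (pos a) (pos b) 1%g i (edge_pt (pos a i) (pos b i) k t))]
  = (if val k == 1%N then cnt i a else if val k == 3%N then cnt i b else 1)%:E.
Proof.
move=> a0 a1 b0 b1.
case: k => [[|[|[|[|k]]]] hk] //=.
- rewrite -meas_cc; congr (_ _); apply/seteqP; split => t /=.
    by case; rewrite in_itv /=.
  rewrite in_itv /= => ht; split => //; apply: vis_low => //; by right.
- rewrite /cnt; case: ifP => hi.
    rewrite -(meas_co a0); congr (_ _); apply/seteqP; split => t /=.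
      case=> ht /(vis_high a0 a1 b0 b1 ht) /(_ hi) ta.
      by rewrite in_itv /=; move: ht => /andP[-> _].
    rewrite in_itv /= => /andP[t0 ta].
    have ht : 0 <= t <= 1 by rewrite t0 /=; apply: ltW; apply: lt_le_trans ta a1.
    by split => //; apply/(vis_high a0 a1 b0 b1 ht).
  rewrite -meas_cc; congr (_ _); apply/seteqP; split => t /=.
    by case; rewrite in_itv /=.
  by rewrite in_itv /= => ht; split => //; apply/(vis_high a0 a1 b0 b1 ht); rewrite hi.
- rewrite -meas_cc; congr (_ _); apply/seteqP; split => t /=.
    by case; rewrite in_itv /=.
  rewrite in_itv /= => ht; split => //; apply: vis_low => //; by left.
- rewrite /cnt; case: ifP => hi.
    rewrite -(meas_co b0); congr (_ _); apply/seteqP; split => t /=.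
      case=> ht /(vis_right a0 a1 b0 b1 ht) /(_ hi) ta.
      by rewrite in_itv /=; move: ht => /andP[-> _].
    rewrite in_itv /= => /andP[t0 ta].
    have ht : 0 <= t <= 1 by rewrite t0 /=; apply: ltW; apply: lt_le_trans ta b1.
    by split => //; apply/(vis_right a0 a1 b0 b1 ht).
  rewrite -meas_cc; congr (_ _); apply/seteqP; split => t /=.
    by case; rewrite in_itv /=.
  by rewrite in_itv /= => ht; split => //; apply/(vis_right a0 a1 b0 b1 ht); rewrite hi.
Qed.

Lemma gap_sq {R : realType} (a b : R) n (i : 'I_n) :
  0 < a -> a <= 1 -> 0 < b -> b <= 1 ->
  square_gap (pos a) (pos b) 1%g i = (cnt i a + cnt i b)%:E.
Proof.
move=> a0 a1 b0 b1; rewrite /square_gap /visible_perimeter.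
under eq_bigr => k _ do rewrite (@meas_edge R a b n i k a0 a1 b0 b1).
rewrite sumEFin !big_ord_recl big_ord0 /= -EFinB; congr (_%:E).
rewrite /bump /=; ring.
Qed.

Lemma frac_facts {R : realType} (w : R) n : 1 < w <= 2 -> (2 <= n)%N ->
  0 < (w - 1) / (n%:R - 1) /\ (w - 1) / (n%:R - 1) <= 1 /\
  (n%:R - 1) * ((w - 1) / (n%:R - 1)) = w - 1.
Proof.
move=> /andP[w1 w2] n2.
have hn : (2:R) <= n%:R by rewrite (ler_nat R 2 n).
have N0 : 0 < n%:R - 1 :> R by lra.
split; first by apply: divr_gt0; lra.
split; first by rewrite ler_pdivrMr // mul1r; lra.
by rewrite mulrC divfK // gt_eqF.
Qed.

Lemma pos_le {R : realType} (a : R) n (i j : 'I_n) : 0 <= a -> (i <= j)%N -> pos a i <= pos a j.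
Proof. by move=> a0 ij; rewrite /pos lerD2l ler_wpM2r // ler_nat. Qed.

Lemma pos_bnd {R : realType} (a : R) n (i : 'I_n) : 0 <= a ->
  2^-1 <= pos a i <= 2^-1 + (n%:R - 1) * a.
Proof.
move=> a0; rewrite /pos lerDl mulr_ge0 //= lerD2l ler_wpM2r //.
have : ((i:nat).+1%:R <= n%:R :> R) by rewrite ler_nat.
rewrite -natr1; lra.
Qed.

Theorem lemma5 (R : realType) (w h : R) (n : nat)
  (hw : 1 < w <= 2) (hh : 1 < h <= 2) (hn : (2 <= n)%N) :
  exists y : 'I_n -> R,
    (forall i, 2^-1 <= y i <= h - 2^-1) /\
    (forall i j : 'I_n, (i < j)%N -> y i < y j) /\
    exists (x : 'I_n -> R) (sigma : {perm 'I_n}),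
      is_layout w x /\ is_staircase x sigma /\
      layout_gap x y sigma = ((w + h - 2) / (n%:R - 1))%:E.
Proof.
have [a0 [a1 ea]] := @frac_facts R w n hw hn.
have [b0 [b1 eb]] := @frac_facts R h n hh hn.
set a := (w - 1) / _ in a0 a1 ea *.
set b := (h - 1) / _ in b0 b1 eb *.
have eab : (w + h - 2) / (n%:R - 1) = a + b by rewrite /a /b -mulrDl; congr (_ / _); ring.
exists (pos b); split.
  move=> i; have := @pos_bnd R b n i (ltW b0); rewrite eb => /andP[? ?]; apply/andP; split; lra.
split.
  move=> i j ij; have := pos_gap b0 ij; lra.
exists (pos a), 1%g; split.
  move=> i; have := @pos_bnd R a n i (ltW a0); rewrite ea => /andP[? ?]; apply/andP; split; lra.
split.
  split; left; first by move=> i j; apply: pos_le; exact: ltW.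
  by move=> i j; rewrite behind1.
rewrite eab /layout_gap.
under eq_bigr => i _ do rewrite (@gap_sq R a b n i a0 a1 b0 b1).
have i0 : (0 < n)%N by apply: leq_trans hn.
apply/le_anti/andP; split.
  apply: le_trans (bigmin_le _ (Ordinal i0) _) _.
  by rewrite /cnt /= hn.
apply: le_bigmin; first exact: leey.
move=> i _; rewrite lee_fin /cnt.
case: ifP => _; lra.
Qed.
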